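(* Let ten lines in the Euclidean plane be given by polar coordinates $(r_i,\theta_i)$, $i=1,\dots,10$, and write $s_{ij}=\sin(\theta_j-\theta_i)$. Suppose that the triangles $(2,4,6)$, $(1,5,9)$, $(1,5,10)$, $(1,5,7)$ are positively oriented and the triangles $(1,3,7)$, $(1,4,7)$, $(3,5,8)$, $(2,8,9)$, $(6,7,10)$ are negatively oriented, where for each of these nine triangles $(i,j,k)$ we have $0<\theta_i<\theta_j<\theta_k<180$. Then $$s_{89}\,s_{1,10}\,s_{24}\,s_{35}\,s_{67}+s_{46}\,s_{19}\,s_{7,10}\,s_{35}\,s_{28}-s_{46}\,s_{38}\,s_{7,10}\,s_{29}\,s_{15}>0 .$$
   Context: Angles are in degrees. A line with polar coordinates $(r,\theta)$ is the line $\{(p,q)\in\mathbb{R}^2: p\cos\theta+q\sin\theta=r\}$, i.e. $r$ is the perpendicular distance from the origin and $\theta$ is the angle the perpendicular makes with the polar direction. No ordering $\theta_i<\theta_j$ for $i<j$ is assumed except those specified. For three lines $i,j,k$ with $\theta_i<\theta_j<\theta_k$, the triangle $(i,j,k)$ is called positively oriented if $r_i\sin(\theta_k-\theta_j)-r_j\sin(\theta_k-\theta_i)+r_k\sin(\theta_j-\theta_i)>0$ (geometrically: the origin lies in an unbounded face of the arrangement of the three lines bounded by three edges) and negatively oriented if $-r_i\sin(\theta_k-\theta_j)+r_j\sin(\theta_k-\theta_i)-r_k\sin(\theta_j-\theta_i)>0$ (the origin lies in an unbounded face with two edges). *)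

(* Defs.v *)
From Stdlib Require Export Reals.
Open Scope R_scope.

Definition sind (x : R) : R := sin (x * PI / 180).

Definition s (th : nat -> R) (i j : nat) : R := sind (th j - th i).

Definition ordered3 (th : nat -> R) (i j k : nat) : Prop :=
  0 < th i /\ th i < th j /\ th j < th k /\ th k < 180.

Definition pos_oriented (r th : nat -> R) (i j k : nat) : Prop :=
  r i * sind (th k - th j) - r j * sind (th k - th i) + r k * sind (th j - th i) > 0.

Definition neg_oriented (r th : nat -> R) (i j k : nat) : Prop :=
  - r i * sind (th k - th j) + r j * sind (th k - th i) - r k * sind (th j - th i) > 0.

(* Main.v *)
Require Import Defs.
From Stdlib Require Import Reals Lra.
Open Scope R_scope.

Lemma sind_pos x : 0 < x < 180 -> 0 < sind x.
Proof.
  intros [h1 h2]. unfold sind. apply sin_gt_0.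
  - assert (HP := PI_RGT_0). change (0 < x * PI * / 180). apply Rmult_lt_0_compat; [apply Rmult_lt_0_compat; lra | apply Rinv_0_lt_compat; lra].
  - assert (HP := PI_RGT_0). change (x * PI * / 180 < PI). apply Rmult_lt_reg_r with 180; [lra|].
    unfold Rdiv. rewrite Rmult_assoc, Rinv_l by lra. nra.
Qed.

Lemma sind_diff x y : sind (x - y) =
  sin (x * PI / 180) * cos (y * PI / 180) - cos (x * PI / 180) * sin (y * PI / 180).
Proof.
  unfold sind, toRad, plat. rewrite <- sin_minus. f_equal. unfold Rdiv. ring.
Qed.

Theorem theoremt (r th : nat -> R) :
  ordered3 th 2 4 6 -> ordered3 th 1 5 9 -> ordered3 th 1 5 10 ->
  ordered3 th 1 5 7 -> ordered3 th 1 3 7 -> ordered3 th 1 4 7 ->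
  ordered3 th 3 5 8 -> ordered3 th 2 8 9 -> ordered3 th 6 7 10 ->
  pos_oriented r th 2 4 6 -> pos_oriented r th 1 5 9 ->
  pos_oriented r th 1 5 10 -> pos_oriented r th 1 5 7 ->
  neg_oriented r th 1 3 7 -> neg_oriented r th 1 4 7 ->
  neg_oriented r th 3 5 8 -> neg_oriented r th 2 8 9 ->
  neg_oriented r th 6 7 10 ->
  s th 8 9 * s th 1 10 * s th 2 4 * s th 3 5 * s th 6 7
  + s th 4 6 * s th 1 9 * s th 7 10 * s th 3 5 * s th 2 8
  - s th 4 6 * s th 3 8 * s th 7 10 * s th 2 9 * s th 1 5 > 0.
Proof.
  unfold ordered3, pos_oriented, neg_oriented, s.
  intros O1 O2 O3 O4 O5 O6 O7 O8 O9 Q246 Q159 Q1510 Q157 Q137 Q147 Q358 Q289 Q6710.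
  assert (p1_5 : 0 < sind (th 5%nat - th 1%nat)) by (apply sind_pos; lra).
  assert (p3_5 : 0 < sind (th 5%nat - th 3%nat)) by (apply sind_pos; lra).
  assert (p1_7 : 0 < sind (th 7%nat - th 1%nat)) by (apply sind_pos; lra).
  assert (p4_6 : 0 < sind (th 6%nat - th 4%nat)) by (apply sind_pos; lra).
  assert (p7_10 : 0 < sind (th 10%nat - th 7%nat)) by (apply sind_pos; lra).
  assert (p2_8 : 0 < sind (th 8%nat - th 2%nat)) by (apply sind_pos; lra).
  assert (p2_9 : 0 < sind (th 9%nat - th 2%nat)) by (apply sind_pos; lra).
  assert (p8_9 : 0 < sind (th 9%nat - th 8%nat)) by (apply sind_pos; lra).
  assert (p2_4 : 0 < sind (th 4%nat - th 2%nat)) by (apply sind_pos; lra).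
  assert (p6_7 : 0 < sind (th 7%nat - th 6%nat)) by (apply sind_pos; lra).
  assert (p5_8 : 0 < sind (th 8%nat - th 5%nat)) by (apply sind_pos; lra).
  assert (p2_6 : 0 < sind (th 6%nat - th 2%nat)) by (apply sind_pos; lra).
  assert (Hid : (sind (th 5%nat - th 1%nat) * sind (th 5%nat - th 3%nat) * sind (th 7%nat - th 1%nat) * sind (th 6%nat - th 4%nat) * sind (th 10%nat - th 7%nat)) * (- r 2%nat * sind (th 9%nat - th 8%nat) + r 8%nat * sind (th 9%nat - th 2%nat) - r 9%nat * sind (th 8%nat - th 2%nat)) + (sind (th 8%nat - th 2%nat) * sind (th 5%nat - th 3%nat) * sind (th 7%nat - th 1%nat) * sind (th 6%nat - th 4%nat) * sind (th 10%nat - th 7%nat)) * (r 1%nat * sind (th 9%nat - th 5%nat) - r 5%nat * sind (th 9%nat - th 1%nat) + r 9%nat * sind (th 5%nat - th 1%nat)) + (sind (th 9%nat - th 2%nat) * sind (th 5%nat - th 1%nat) * sind (th 7%nat - th 1%nat) * sind (th 6%nat - th 4%nat) * sind (th 10%nat - th 7%nat)) * (- r 3%nat * sind (th 8%nat - th 5%nat) + r 5%nat * sind (th 8%nat - th 3%nat) - r 8%nat * sind (th 5%nat - th 3%nat)) + (sind (th 9%nat - th 8%nat) * sind (th 5%nat - th 1%nat) * sind (th 5%nat - th 3%nat) * sind (th 7%nat - th 1%nat) * sind (th 10%nat - th 7%nat)) * (r 2%nat * sind (th 6%nat - th 4%nat) - r 4%nat * sind (th 6%nat - th 2%nat) + r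 6%nat * sind (th 4%nat - th 2%nat)) + (sind (th 9%nat - th 8%nat) * sind (th 4%nat - th 2%nat) * sind (th 5%nat - th 1%nat) * sind (th 5%nat - th 3%nat) * sind (th 7%nat - th 1%nat)) * (- r 6%nat * sind (th 10%nat - th 7%nat) + r 7%nat * sind (th 10%nat - th 6%nat) - r 10%nat * sind (th 7%nat - th 6%nat)) + (sind (th 9%nat - th 8%nat) * sind (th 4%nat - th 2%nat) * sind (th 7%nat - th 6%nat) * sind (th 5%nat - th 3%nat) * sind (th 7%nat - th 1%nat)) * (r 1%nat * sind (th 10%nat - th 5%nat) - r 5%nat * sind (th 10%nat - th 1%nat) + r 10%nat * sind (th 5%nat - th 1%nat)) + (sind (th 9%nat - th 2%nat) * sind (th 8%nat - th 5%nat) * sind (th 5%nat - th 1%nat) * sind (th 6%nat - th 4%nat) * sind (th 10%nat - th 7%nat)) * (- r 1%nat * sind (th 7%nat - th 3%nat) + r 3%nat * sind (th 7%nat - th 1%nat) - r 7%nat * sind (th 3%nat - th 1%nat)) + (sind (th 9%nat - th 8%nat) * sind (th 6%nat - th 2%nat) * sind (th 5%nat - th 1%nat) * sind (th 5%nat - th 3%nat) * sind (th 10%nat - th 7%nat)) * (- r 1%nat * sind (th 7%nat - th 4%nat) + r 4%nat * sind (th 7%nat - th 1%nat) - r 7%nat * sind (th 4%nat - th 1%nat)) + (- (sind (th 9%nat - th 8%nat) * sind (th 10%nat - th 1%nat) * sind (th 4%nat - th 2%nat) * sind (th 5%nat - th 3%nat) * sind (th 7%nat - th 6%nat) + sind (th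 6%nat - th 4%nat) * sind (th 9%nat - th 1%nat) * sind (th 10%nat - th 7%nat) * sind (th 5%nat - th 3%nat) * sind (th 8%nat - th 2%nat) - sind (th 6%nat - th 4%nat) * sind (th 8%nat - th 3%nat) * sind (th 10%nat - th 7%nat) * sind (th 9%nat - th 2%nat) * sind (th 5%nat - th 1%nat))) * (r 1%nat * sind (th 7%nat - th 5%nat) - r 5%nat * sind (th 7%nat - th 1%nat) + r 7%nat * sind (th 5%nat - th 1%nat)) = 0).
  { rewrite !sind_diff. ring. }
  destruct (Rle_or_lt (sind (th 9%nat - th 8%nat) * sind (th 10%nat - th 1%nat) * sind (th 4%nat - th 2%nat) * sind (th 5%nat - th 3%nat) * sind (th 7%nat - th 6%nat) + sind (th 6%nat - th 4%nat) * sind (th 9%nat - th 1%nat) * sind (th 10%nat - th 7%nat) * sind (th 5%nat - th 3%nat) * sind (th 8%nat - th 2%nat) - sind (th 6%nat - th 4%nat) * sind (th 8%nat - th 3%nat) * sind (th 10%nat - th 7%nat) * sind (th 9%nat - th 2%nat) * sind (th 5%nat - th 1%nat)) 0) as [HE|HE]; [|exact HE].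
  assert (HF : 0 <= (- (sind (th 9%nat - th 8%nat) * sind (th 10%nat - th 1%nat) * sind (th 4%nat - th 2%nat) * sind (th 5%nat - th 3%nat) * sind (th 7%nat - th 6%nat) + sind (th 6%nat - th 4%nat) * sind (th 9%nat - th 1%nat) * sind (th 10%nat - th 7%nat) * sind (th 5%nat - th 3%nat) * sind (th 8%nat - th 2%nat) - sind (th 6%nat - th 4%nat) * sind (th 8%nat - th 3%nat) * sind (th 10%nat - th 7%nat) * sind (th 9%nat - th 2%nat) * sind (th 5%nat - th 1%nat))) * (r 1%nat * sind (th 7%nat - th 5%nat) - r 5%nat * sind (th 7%nat - th 1%nat) + r 7%nat * sind (th 5%nat - th 1%nat))) by (apply Rmult_le_pos; [clear - HE; lra | left; exact Q157]).
  assert (T0 : 0 < (sind (th 5%nat - th 1%nat) * sind (th 5%nat - th 3%nat) * sind (th 7%nat - th 1%nat) * sind (th 6%nat - th 4%nat) * sind (th 10%nat - th 7%nat)) * (- r 2%nat * sind (th 9%nat - th 8%nat) + r 8%nat * sind (th 9%nat - th 2%nat) - r 9%nat * sind (th 8%nat - th 2%nat))) by (apply Rmult_lt_0_compat; [repeat apply Rmult_lt_0_compat; assumption | exact Q289]).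
  assert (T1 : 0 < (sind (th 8%nat - th 2%nat) * sind (th 5%nat - th 3%nat) * sind (th 7%nat - th 1%nat) * sind (th 6%nat - th 4%nat) * sind (th 10%nat - th 7%nat)) * (r 1%nat * sind (th 9%nat - th 5%nat) - r 5%nat * sind (th 9%nat - th 1%nat) + r 9%nat * sind (th 5%nat - th 1%nat))) by (apply Rmult_lt_0_compat; [repeat apply Rmult_lt_0_compat; assumption | exact Q159]).
  assert (T2 : 0 < (sind (th 9%nat - th 2%nat) * sind (th 5%nat - th 1%nat) * sind (th 7%nat - th 1%nat) * sind (th 6%nat - th 4%nat) * sind (th 10%nat - th 7%nat)) * (- r 3%nat * sind (th 8%nat - th 5%nat) + r 5%nat * sind (th 8%nat - th 3%nat) - r 8%nat * sind (th 5%nat - th 3%nat))) by (apply Rmult_lt_0_compat; [repeat apply Rmult_lt_0_compat; assumption | exact Q358]).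
  assert (T3 : 0 < (sind (th 9%nat - th 8%nat) * sind (th 5%nat - th 1%nat) * sind (th 5%nat - th 3%nat) * sind (th 7%nat - th 1%nat) * sind (th 10%nat - th 7%nat)) * (r 2%nat * sind (th 6%nat - th 4%nat) - r 4%nat * sind (th 6%nat - th 2%nat) + r 6%nat * sind (th 4%nat - th 2%nat))) by (apply Rmult_lt_0_compat; [repeat apply Rmult_lt_0_compat; assumption | exact Q246]).
  assert (T4 : 0 < (sind (th 9%nat - th 8%nat) * sind (th 4%nat - th 2%nat) * sind (th 5%nat - th 1%nat) * sind (th 5%nat - th 3%nat) * sind (th 7%nat - th 1%nat)) * (- r 6%nat * sind (th 10%nat - th 7%nat) + r 7%nat * sind (th 10%nat - th 6%nat) - r 10%nat * sind (th 7%nat - th 6%nat))) by (apply Rmult_lt_0_compat; [repeat apply Rmult_lt_0_compat; assumption | exact Q6710]).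
  assert (T5 : 0 < (sind (th 9%nat - th 8%nat) * sind (th 4%nat - th 2%nat) * sind (th 7%nat - th 6%nat) * sind (th 5%nat - th 3%nat) * sind (th 7%nat - th 1%nat)) * (r 1%nat * sind (th 10%nat - th 5%nat) - r 5%nat * sind (th 10%nat - th 1%nat) + r 10%nat * sind (th 5%nat - th 1%nat))) by (apply Rmult_lt_0_compat; [repeat apply Rmult_lt_0_compat; assumption | exact Q1510]).
  assert (T6 : 0 < (sind (th 9%nat - th 2%nat) * sind (th 8%nat - th 5%nat) * sind (th 5%nat - th 1%nat) * sind (th 6%nat - th 4%nat) * sind (th 10%nat - th 7%nat)) * (- r 1%nat * sind (th 7%nat - th 3%nat) + r 3%nat * sind (th 7%nat - th 1%nat) - r 7%nat * sind (th 3%nat - th 1%nat))) by (apply Rmult_lt_0_compat; [repeat apply Rmult_lt_0_compat; assumption | exact Q137]).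
  assert (T7 : 0 < (sind (th 9%nat - th 8%nat) * sind (th 6%nat - th 2%nat) * sind (th 5%nat - th 1%nat) * sind (th 5%nat - th 3%nat) * sind (th 10%nat - th 7%nat)) * (- r 1%nat * sind (th 7%nat - th 4%nat) + r 4%nat * sind (th 7%nat - th 1%nat) - r 7%nat * sind (th 4%nat - th 1%nat))) by (apply Rmult_lt_0_compat; [repeat apply Rmult_lt_0_compat; assumption | exact Q147]).
  clear - Hid HF T0 T1 T2 T3 T4 T5 T6 T7. lra.
Qed.
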